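(* Let $\mathbb{K}\in\{\mathbb{R},\mathbb{C}\}$ and let $X$ be an infinite-dimensional normed vector space over $\mathbb{K}$. Suppose $o(X)=|X|=\dim X$. Then there exists a family $\mathcal{B}$ of (Hamel) bases of $X$ such that $|\mathcal{B}|=2^{|X|}$ and every element of $\mathcal{B}$ is a connected, locally connected and dense subset of $X$.
   Context: $|S|$ denotes the cardinality of a set $S$. $\dim X$ denotes the algebraic (Hamel) dimension of $X$, i.e. the cardinality of an algebraic basis of $X$ over $\mathbb{K}$. $o(X)$ denotes the cardinality of the family of all open subsets of $X$ (with respect to the norm topology). A basis always means an algebraic (Hamel) basis; topological notions refer to the norm topology and induced subspace topologies. *)

(* Defs.v *)
From HB Require Import structures.
From mathcomp Require Import all_boot all_order all_algebra.
From mathcomp Require Import all_classical all_reals all_analysis.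
From mathcomp Require Import complex.
Set Implicit Arguments. Unset Strict Implicit. Unset Printing Implicit Defensive.
Import Order.TTheory GRing.Theory Num.Theory.
Import numFieldNormedType.Exports.
Local Open Scope classical_set_scope.
Local Open Scope ring_scope.
Local Open Scope card_scope.

Section Hamel.
Variables (K : numFieldType) (X : lmodType K).

Definition lincomb (s : seq X) (c : nat -> K) : X :=
  \sum_(i < size s) c i *: s`_i.

Definition lin_indep (B : set X) : Prop :=
  forall (s : seq X) (c : nat -> K),
    uniq s -> (forall x, x \in s -> B x) -> lincomb s c = 0 ->
    forall i, (i < size s)%N -> c i = 0.

Definition spans (B : set X) : Prop :=
  forall x : X, exists (s : seq X) (c : nat -> K),
    (forall y, y \in s -> B y) /\ x = lincomb s c.

Definition hamel_basis (B : set X) : Prop := lin_indep B /\ spans B.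

Definition infinite_dimensional : Prop :=
  forall s : seq X, ~ spans [set x | x \in s].
End Hamel.

Definition locally_connected_set (T : topologicalType) (A : set T) : Prop :=
  forall x, A x -> forall U : set T, open U -> U x ->
    exists V : set T, [/\ open V, V x, V `&` A `<=` U & connected (V `&` A)].

Definition theorem2_claim (K : numFieldType) : Prop :=
  forall X : normedModType K,
    infinite_dimensional X ->
    (* o(X) = |X| *)
    [set U : set X | open U] #= [set: X] ->
    (exists B : set X, hamel_basis B /\ B #= [set: X]) ->
    exists F : set (set X),
      F #= [set: set X] /\
      (forall B, F B ->
         [/\ hamel_basis B, connected B, locally_connected_set B & dense B]).

(* Main.v *)
Require Import Defs.
From HB Require Import structures.
From mathcomp Require Import all_boot all_order all_algebra.
From mathcomp Require Import all_classical all_reals all_analysis.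
From mathcomp Require Import complex.
Set Implicit Arguments. Unset Strict Implicit. Unset Printing Implicit Defensive.
Import Order.TTheory GRing.Theory Num.Theory.
Import numFieldNormedType.Exports.
Local Open Scope classical_set_scope.
Local Open Scope ring_scope.
Local Open Scope card_scope.
From mathcomp Require wochoice.

Lemma card_eq_leW T U (A : set T) (B : set U) : (A #= B)%card -> (A #<= B)%card.
Proof. by rewrite card_eq_le => /andP[]. Qed.

Lemma inj_card_le T U (A : set T) (B : set U) (f : T -> U) :
  {in A &, injective f} -> (forall x, A x -> B (f x)) -> (A #<= B)%card.
Proof.
move=> fi fAB; apply: (card_le_trans (card_eq_leW (card_esym (inj_card_eq fi)))).
by apply: subset_card_le => _ [x Ax <-]; apply: fAB.
Qed.

Lemma list_max (T : eqType) (P : T -> Prop) (r : T -> T -> Prop) (l : seq T) :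
  (forall x y, P x -> P y -> x <> y -> r x y \/ r y x) ->
  (forall x y z, r x y -> r y z -> r x z) ->
  (forall x, x \in l -> P x) -> l != [::] ->
  exists2 m, m \in l & forall z, z \in l -> z = m \/ r z m.
Proof.
move=> tot tr; elim: l => [//|x [|x' l'] IH] lP _.
  exists x; first by rewrite inE.
  by move=> z; rewrite inE => /eqP ->; left.
have [|//|m ml' Hm] := IH; first by move=> z zl; apply: lP; rewrite inE zl orbT.
have [->|xm] := eqVneq x m.
  exists m; first by rewrite inE eqxx.
  by move=> z; rewrite inE => /orP[/eqP->|/Hm]; [left|].
have xm' : x <> m by apply/eqP.
have Px : P x by apply: lP; rewrite inE eqxx.
have Pm : P m by apply: lP; rewrite inE ml' orbT.
have [rxm|rmx] := tot x m Px Pm xm'.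
- exists m; first by rewrite inE ml' orbT.
  by move=> z; rewrite inE => /orP[/eqP->|/Hm]; [right|].
- exists x; first by rewrite inE eqxx.
  move=> z; rewrite inE => /orP[/eqP->|/Hm[->|rzm]]; [left|right|right] => //.
  exact: tr rmx.
Qed.

Section LinAlg.
Variables (K : numFieldType) (X : lmodType K).
Implicit Types (G B : set X) (s u : seq X).

Definition span G : set X := [set x | exists s, [/\ uniq s, (forall y, y \in s -> G y) &
  exists f : X -> K, x = \sum_(y <- s) f y *: y]].

Definition indep B := forall s (f : X -> K), uniq s -> (forall y, y \in s -> B y) ->
  \sum_(y <- s) f y *: y = 0 -> forall y, y \in s -> f y = 0.

Lemma sum_sub_uniq s u (F : X -> X) : uniq s -> uniq u -> {subset s <= u} ->
  \sum_(y <- s) F y = \sum_(y <- u) (if y \in s then F y else 0).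
Proof.
move=> us uu su; rewrite -big_mkcond /= -(big_filter u); apply: perm_big.
apply: uniq_perm => //; first exact: filter_uniq.
by move=> y; rewrite mem_filter; case ys: (y \in s) => //=; rewrite su.
Qed.

Lemma span0 G : span G 0.
Proof. by exists [::]; split => //; exists (fun=> 0); rewrite big_nil. Qed.

Lemma span_sub G : G `<=` span G.
Proof.
move=> y Gy; exists [:: y]; split => //; first by move=> z; rewrite inE => /eqP->.
by exists (fun=> 1); rewrite big_seq1 scale1r.
Qed.

Lemma spanZ G a x : span G x -> span G (a *: x).
Proof.
move=> [s [us sG [f ->]]]; exists s; split => //; exists (fun y => a * f y).
by rewrite scaler_sumr; apply: eq_bigr => y _; rewrite scalerA.
Qed.

Lemma spanD G x x' : span G x -> span G x' -> span G (x + x').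
Proof.
move=> [s [us sG [f ->]]] [s' [us' sG' [f' ->]]].
exists (undup (s ++ s')); split; first exact: undup_uniq.
  by move=> y; rewrite mem_undup mem_cat => /orP[/sG|/sG'].
exists (fun y => (if y \in s then f y else 0) + (if y \in s' then f' y else 0)).
have ss : {subset s <= undup (s ++ s')} by move=> y ys; rewrite mem_undup mem_cat ys.
have ss' : {subset s' <= undup (s ++ s')}.
  by move=> y ys; rewrite mem_undup mem_cat ys orbT.
rewrite (sum_sub_uniq _ us (undup_uniq _) ss) (sum_sub_uniq _ us' (undup_uniq _) ss').
rewrite -big_split /=; apply: eq_bigr => y _; rewrite scalerDl.
by congr (_ + _); case: ifP => _; rewrite ?scale0r.
Qed.

Lemma spanN G x : span G x -> span G (- x).
Proof. by move=> /(spanZ (-1)); rewrite scaleN1r. Qed.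

Lemma span_sum G (I : Type) (r : seq I) (P : pred I) (F : I -> X) :
  (forall i, P i -> span G (F i)) -> span G (\sum_(i <- r | P i) F i).
Proof.
move=> H; apply: (big_ind (span G)); [exact: span0| exact: spanD|exact: H].
Qed.

Lemma span_trans G G' : G `<=` span G' -> span G `<=` span G'.
Proof.
move=> GG' x [s [us sG [f ->]]]; rewrite big_seq_cond; apply: span_sum => y.
by rewrite andbT => /sG /GG' /spanZ; apply.
Qed.

Lemma span_mono G G' : G `<=` G' -> span G `<=` span G'.
Proof. by move=> GG'; apply: span_trans => y /GG' /span_sub. Qed.

Lemma sum_nth (s : seq X) (F : X -> X) :
  \sum_(y <- s) F y = \sum_(i < size s) F (s`_i).
Proof. by rewrite (big_nth 0) big_mkord. Qed.

Lemma spansP B : spans B <-> forall x, span B x.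
Proof.
split=> [H x|H x].
  have [s [c [sB ->]]] := H x; rewrite /lincomb.
  by apply: span_sum => i _; apply/spanZ/span_sub/sB/mem_nth.
have [s [_ sB [f ->]]] := H x; exists s, (fun i => f s`_i); split => //.
by rewrite /lincomb sum_nth.
Qed.

Lemma indepP B : lin_indep B <-> indep B.
Proof.
split=> [H s f us sB s0 y ys|H s c us sB s0 i lti].
  have := H s (fun i => f s`_i) us sB; rewrite /lincomb -(sum_nth s (fun y => f y *: y)) => /(_ s0).
  by move=> /(_ (index y s)); rewrite index_mem nth_index //; apply.
have := H s (fun y => c (index y s)) us sB.
rewrite sum_nth (eq_bigr (fun i : 'I_(size s) => c i *: s`_i)) => [/(_ s0)|].
  by move=> /(_ (s`_i) (mem_nth _ lti)); rewrite index_uniq.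
by move=> j _; rewrite index_uniq.
Qed.


Lemma dim_le (E G : set X) : indep E -> (forall g, G g -> span E g) ->
  (forall e, E e -> span G e) -> (E #<= G `*` [set: nat])%card.
Proof.
move=> HE GE EG.
have /choice [rep Hrep] : forall g, exists p : seq X * (X -> K), G g ->
    [/\ uniq p.1, (forall y, y \in p.1 -> E y) & g = \sum_(y <- p.1) p.2 y *: y].
  move=> g; have [Gg|nGg] := pselect (G g); last by exists ([::], fun=> 0).
  by have [s [us sE [f ->]]] := GE g Gg; exists (s, f).
have key : forall e, E e -> exists g, G g /\ e \in (rep g).1.
  move=> e Ee; have [//|Hn] := pselect (exists g, G g /\ e \in (rep g).1).
  exfalso.
  have [t [ut tG [a ea]]] := EG e Ee.
  pose u := undup (flatten (map (fun g => (rep g).1) t)).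
  pose h y := \sum_(g <- t) a g * (if y \in (rep g).1 then (rep g).2 y else 0).
  have memu y g : g \in t -> y \in (rep g).1 -> y \in u.
    move=> gt yg; rewrite mem_undup; apply/flattenP; exists (rep g).1 => //.
    by apply/mapP; exists g.
  have uE y : y \in u -> E y.
    rewrite mem_undup => /flattenP [s' /mapP [g gt ->]].
    by have [_ + _] := Hrep g (tG g gt); apply.
  have enu : e \notin u.
    apply/negP; rewrite mem_undup => /flattenP [s' /mapP [g gt ->]] eg.
    by apply: Hn; exists g; split => //; apply: tG.
  have eu : e = \sum_(y <- u) h y *: y.
    rewrite {1}ea.
    under [RHS]eq_bigr do rewrite /h scaler_suml.
    rewrite exchange_big /= big_seq [RHS]big_seq; apply: eq_bigr => g gt.
    have [ug ugE ge] := Hrep g (tG g gt).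
    rewrite {2}ge scaler_sumr (sum_sub_uniq _ ug (undup_uniq _) (fun y => memu y g gt)).
    by apply: eq_bigr => y _; case: ifP => _; rewrite ?mulr0 ?scale0r ?scaler0 ?scalerA.
  pose F y := if y == e then 1 else - h y.
  have ueu : uniq (e :: u) by rewrite /= enu undup_uniq.
  have sub : forall y, y \in e :: u -> E y by move=> y; rewrite inE => /orP[/eqP->|/uE].
  have := HE (e :: u) F ueu sub.
  rewrite big_cons /F eqxx scale1r.
  have -> : \sum_(j <- u) (if j == e then 1 else - h j) *: j = - \sum_(j <- u) h j *: j.
    rewrite -sumrN big_seq [RHS]big_seq; apply: eq_bigr => y yu.
    rewrite ifF ?scaleNr //; apply/negP => /eqP ye.
    by move: yu; rewrite ye (negbTE enu).
  rewrite -eu subrr => /(_ erefl e (mem_head _ _)).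
  by rewrite eqxx => /eqP; rewrite oner_eq0.
have /choice [gs Hgs] : forall e, exists g, E e -> G g /\ e \in (rep g).1.
  move=> e; have [Ee|nEe] := pselect (E e); last by exists 0.
  by have [g ?] := key e Ee; exists g.
pose phi e := (gs e, index e (rep (gs e)).1).
have phiinj : {in E &, injective phi}.
  move=> e e' /set_mem Ee /set_mem Ee' [ge ie].
  have [_ He] := Hgs e Ee; have [_ He'] := Hgs e' Ee'.
  by rewrite -(nth_index 0 He) -(nth_index 0 He') ie ge.
apply: (inj_card_le phiinj) => e Ee; split => //=.
by have [] := Hgs e Ee.
Qed.


Lemma indep_wo (I : Type) (J : set I) (lt : I -> I -> Prop) (q : I -> X) :
  (forall i j, J i -> J j -> i <> j -> lt i j \/ lt j i) ->
  (forall i j k, lt i j -> lt j k -> lt i k) ->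
  (forall j, J j -> ~ span (q @` [set i | J i /\ lt i j]) (q j)) ->
  {in J &, injective q} /\ indep (q @` J).
Proof.
move=> tot tr Hq.
have qinj : {in J &, injective q}.
  move=> i j /set_mem Ji /set_mem Jj qij; apply: contrapT => nij.
  have [ij|ji] := tot i j Ji Jj nij.
  - by apply: (Hq j Jj); rewrite -qij; apply: span_sub; exists i.
  - by apply: (Hq i Ji); rewrite qij; apply: span_sub; exists j.
split => // s f us sJ s0 y0 y0s; apply: contrapT => fy0.
have [i0 _ _] := sJ y0 y0s.
have /choice [idx Hidx] : forall y, exists i, (q @` J) y -> J i /\ q i = y.
  move=> y; have [[i Ji <-]|ny] := pselect ((q @` J) y); last by exists i0 => /ny.
  by exists i.
pose l := [seq y <- s | f y != 0].
have [||||m ml Hm] := list_max (P := q @` J) (r := fun y z => lt (idx y) (idx z)) (l := l).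
- move=> y z Py Pz yz; apply: tot; [exact: (Hidx y Py).1|exact: (Hidx z Pz).1|].
  by move=> e; apply: yz; rewrite -(Hidx y Py).2 -(Hidx z Pz).2 e.
- by move=> a b c; apply: tr.
- by move=> y; rewrite mem_filter => /andP[_ /sJ].
- by apply/eqP => l0; move: (mem_filter (fun y => f y != 0) y0 s); rewrite -/l l0 y0s andbT; move/eqP: fy0 => ->.
move: ml; rewrite mem_filter => /andP[fm ms].
have [Jm qm] := Hidx m (sJ m ms).
apply: (Hq _ Jm); rewrite qm.
set W := (q @` _).
move: s0; rewrite (bigD1_seq m ms us) /= => /eqP; rewrite addr_eq0 => /eqP e.
have -> : m = (f m)^-1 *: (f m *: m) by rewrite scalerA mulVf ?scale1r.
rewrite e; apply/spanZ/spanN; rewrite big_seq_cond; apply: span_sum => y /andP[ys ym].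
have [fy|fy] := eqVneq (f y) 0; first by rewrite fy scale0r; apply: span0.
apply/spanZ/span_sub; have [Jy qy] := Hidx y (sJ y ys).
exists (idx y) => //; split => //.
have : y \in l by rewrite mem_filter fy ys.
by move=> /Hm [e1|//]; move: ym; rewrite e1 eqxx.
Qed.

Lemma indepU1 B x : indep B -> ~ span B x -> indep (B `|` [set x]).
Proof.
move=> HB nx s f us sB s0.
have [xs|xns] := boolP (x \in s); last first.
  apply: HB => // y ys; have [//|/= yx] := sB y ys.
  by move: ys; rewrite yx (negbTE xns).
move: (s0); rewrite (bigD1_seq x xs us) /= => e.
have fx : f x = 0.
  apply: contrapT => /eqP fx; apply: nx.
  move/eqP: e; rewrite addr_eq0 => /eqP e.
  have -> : x = (f x)^-1 *: (f x *: x) by rewrite scalerA mulVf ?scale1r.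
  rewrite e; apply/spanZ/spanN; rewrite big_seq_cond; apply: span_sum => y /andP[ys yx].
  apply/spanZ/span_sub; have [//|/= yx'] := sB y ys.
  by move: yx; rewrite yx' eqxx.
move: e; rewrite fx scale0r add0r -big_filter => e y ys.
have [->//|yx] := eqVneq y x.
apply: (HB _ f (filter_uniq _ us) _ e); first by move=> z; rewrite mem_filter => /andP[zx /sB[//|/= zx']]; move: zx; rewrite zx' eqxx.
by rewrite mem_filter yx.
Qed.

Lemma basis_ext A : indep A -> exists B, [/\ A `<=` B, indep B & forall x, span B x].
Proof.
move=> HA.
have [|C [HC Cmax]] := @Zorn_bigcup X [set C | indep (A `|` C)].
  move=> F FP Ftot s f us sAF.
  have : (forall y, y \in s -> A y) \/ exists2 C, F C & forall y, y \in s -> (A `|` C) y.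
    clear us f; elim: s sAF => [|y s IH] sAF; first by left.
    have [|sA|[C FC sC]] := IH; first by move=> z zs; apply: sAF; rewrite inE zs orbT.
    - have [Ay|[C FC Cy]] := sAF y (mem_head _ _); first by left => z; rewrite inE => /orP[/eqP->|/sA].
      by right; exists C => // z; rewrite inE => /orP[/eqP->|/sA]; [right|left].
    - have [Ay|[C' FC' C'y]] := sAF y (mem_head _ _).
        by right; exists C => // z; rewrite inE => /orP[/eqP->|/sC]; [left|].
      have [CC'|C'C] := Ftot C C' FC FC'.
      + right; exists C' => // z; rewrite inE => /orP[/eqP->|/sC[]]; [right|left|right; apply: CC'] => //.
      + right; exists C => // z; rewrite inE => /orP[/eqP->|/sC]; [right; apply: C'C|] => //.
  move=> [sA|[C FC sC]].
    by apply: HA => // y /sA.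
  by apply: (FP C FC) => //.
exists (A `|` C); split; [by move=> y Ay; left | exact: HC | ].
move=> x; apply: contrapT => nx.
have xC : ~ C x by move=> Cx; apply: nx; apply: span_sub; right.
apply: (Cmax (C `|` [set x])).
  split; first by move=> y Cy; left.
  by move=> sub; apply: xC; apply: sub; right.
rewrite /= setUA; exact: indepU1.
Qed.

End LinAlg.

Lemma card_le_fun (T U : Type) (u0 : U) (A : set T) (B : set U) : A #<= B ->
  exists f : T -> U, (forall x, A x -> B (f x)) /\ {in A &, injective f}.
Proof.
move/card_leP => [f].
have finj : injective f by move=> a b; apply: (@inj _ _ [set: A] f); rewrite inE.
exists (fun x => match pselect (A x) with left Ax => sval (f (exist _ x (mem_set Ax))) | right _ => u0 end).
split.
  move=> x Ax; case: pselect => // Ax'; exact: set_mem (svalP (f _)).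
move=> x y /set_mem Ax /set_mem Ay; case: pselect => // Ax'; case: pselect => // Ay' e.
have := finj _ _ (val_inj e); case=> //.
Qed.

Section WO.
Variable (T : eqType).

Lemma wo_facts : exists R : rel T,
  [/\ forall x, R x x, forall x y, R x y -> R y x -> x = y,
      forall x y, R x y \/ R y x, forall x y z, R x y -> R y z -> R x z &
      forall A : set T, (exists x, A x) -> exists z, A z /\ forall x, A x -> R z x].
Proof.
have [R HR] := wochoice.well_ordering_principle T.
have wch : wochoice.wo_chain R predT by move=> A _; apply: HR.
have tot := wochoice.wo_chainW wch.
have refl := wochoice.wo_chain_reflexive wch.
have anti := wochoice.wo_chain_antisymmetric wch.
have wmin : forall A : set T, (exists x, A x) -> exists z, A z /\ forall x, A x -> R z x.
  move=> A [x Ax]; have [|z [[zA zmin] _]] := HR [pred y | `[< A y >]].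
    by exists x; rewrite unfold_in; apply/asboolP.
  exists z; split; first by move: zA; rewrite unfold_in => /asboolP.
  by move=> y Ay; apply: zmin; rewrite unfold_in; apply/asboolP.
have anti' : forall x y, R x y -> R y x -> x = y.
  by move=> x y a b; apply: anti => //; rewrite a b.
have tot' : forall x y, R x y \/ R y x.
  by move=> x y; have := tot x y isT isT; case/orP; [left|right].
exists R; split => //; first by move=> x; apply: refl.
move=> x y z Rxy Ryz.
have [m [Am mmin]] := wmin [set w | w = x \/ w = y \/ w = z] (ex_intro _ x (or_introl erefl)).
have [Rmx Rmy Rmz] : [/\ R m x, R m y & R m z].
  by split; apply: mmin; [left|right;left|right;right].
case: Am => [e|[e|e]]; subst m => //.
  by rewrite (anti' x y Rxy Rmx).
by rewrite -(anti' y z Ryz Rmy).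
Qed.

End WO.

Section Transfinite.
Variables (K : numFieldType) (X : lmodType K).

Definition large (T : set X) := forall G, T `<=` span G -> exists v, forall x, span (G `|` [set v]) x.
Definition infdim := forall s : seq X, ~ (forall x, span [set y | y \in s] x).

Lemma transfinite (E : set X) : indep E -> (forall x, span E x) -> E #= [set: X] -> infdim ->
  exists (J : set (X * nat)) (lt : X * nat -> X * nat -> Prop) (psi : X -> X * nat),
   [/\ (forall i j, J i -> J j -> i <> j -> lt i j \/ lt j i),
       (forall i j k, lt i j -> lt j k -> lt i k),
       (forall x, J (psi x)) /\ injective psi,
       (forall b n m, J (b, n) -> J (b, m))
     & forall T, (forall j, J j -> large (T j)) -> exists q : X * nat -> X,
        forall j, J j -> T j (q j) /\ ~ span (q @` [set i | J i /\ lt i j]) (q j)].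
Proof.
move=> HE Espan EX Hinf.
have [R [Rrefl Ranti Rtot Rtrans wmin]] := wo_facts X.
pose lt1 x y := R x y /\ x <> y.
have lt1_trans x y z : lt1 x y -> lt1 y z -> lt1 x z.
  move=> [Rxy xy] [Ryz yz]; split; first exact: Rtrans Ryz.
  by move=> xz; apply: xy; apply: Ranti => //; rewrite xz.
have lt1_tot x y : x <> y -> lt1 x y \/ lt1 y x.
  by move=> xy; have [a|a] := Rtot x y; [left|right]; split => // /esym.
have lt1_irr x : ~ lt1 x x by case.
have lt1_asym x y : lt1 x y -> ~ R y x by move=> [a b] c; apply: b; exact: Ranti.
pose seg a := [set y | lt1 y a].
pose big (S : set X) := [set: X] #<= S `*` [set: nat].
have [D [bigD Dsmall Ddown]] : exists D, [/\ big D, (forall b, D b -> ~ big (seg b)) &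
    (forall b c, D b -> lt1 c b -> D c)].
  have [[a Ha]|Hn] := pselect (exists a, big (seg a)).
    have [a0 [Ha0 Hmin]] := wmin (fun a => big (seg a)) (ex_intro _ a Ha).
    exists (seg a0); split => //.
      by move=> b [Rba0 ba0] /Hmin Ra0b; apply: ba0; apply: Ranti.
    by move=> b c bD cb; exact: lt1_trans cb bD.
  exists setT; split => //.
    by apply: (inj_card_le (f := fun x => (x, 0%N))) => [x y _ _ []|x _].
  by move=> b _ Hb; apply: Hn; exists b.
have [psi [psiD psiinj]] := card_le_fun (0 : X, 0%N) bigD.
pose J := [set j : X * nat | D j.1].
pose ltJ (i j : X * nat) := lt1 i.1 j.1 \/ (i.1 = j.1 /\ (i.2 < j.2)%N).
have acc1 : forall b, Acc lt1 b.
  move=> b; apply: contrapT => nb.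
  have [m [nm mmin]] := wmin (fun a => ~ Acc lt1 a) (ex_intro _ b nb).
  apply: nm; constructor => y [Rym ym]; apply: contrapT => ny.
  by apply: ym; apply: Ranti => //; apply: mmin.
have wfJ : well_founded ltJ.
  have H : forall b, Acc lt1 b -> forall n, Acc ltJ (b, n).
    move=> b; elim => {}b _ IHb n; elim/ltn_ind: n => n IHn.
    constructor => -[b' n'] [/= lb|/= [eb ln]]; first exact: IHb.
    by rewrite eb; apply: IHn.
  by move=> [b n]; apply: H.
have ltJ_trans : forall i j k, ltJ i j -> ltJ j k -> ltJ i k.
  move=> [b1 n1] [b2 n2] [b3 n3]; rewrite /ltJ /=.
  move=> [l12|[e12 l12]] [l23|[e23 l23]].
  - by left; exact: lt1_trans l23.
  - by left; rewrite -e23.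
  - by left; rewrite e12.
  - by right; split; [rewrite e12|exact: ltn_trans l23].
have ltJ_Jdown : forall i j, J j -> ltJ i j -> J i.
  move=> [b' n'] [b n]; rewrite /J /ltJ /= => Db [l|[-> _]] //.
  exact: Ddown l.
exists J, ltJ, psi; split.
- move=> [b n] [b' n'] _ _ /= ne; rewrite /ltJ /=.
  have [eb|nb] := pselect (b = b'); last by have [l|l] := lt1_tot b b' nb; [left|right]; left.
  subst b'; case: (ltngtP n n') => [l|l|e]; [left|right|]; try by right.
  by rewrite e in ne.
- exact: ltJ_trans.
- split; first by move=> x; exact: (psiD x I).1.
  by move=> x y e; apply: psiinj => //; rewrite inE.
- by [].
move=> T Tlarge.
pose F := fun j (rec : forall i, ltJ i j -> X) =>
  xget 0 [set x | T j x /\ ~ span [set y | exists i (h : ltJ i j), y = rec i h] x].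
pose q := Fix wfJ (fun _ => X) F.
have qE : forall j, q j = xget 0 [set x | T j x /\ ~ span [set y | exists i (h : ltJ i j), y = q i] x].
  move=> j; rewrite /q Fix_eq //.
  move=> j' f g fg; rewrite /F; have -> // : f = g.
  by apply: functional_extensionality_dep => i; apply: functional_extensionality_dep => h; exact: fg.
have prevE : forall j, J j -> [set y | exists i (h : ltJ i j), y = q i] = q @` [set i | J i /\ ltJ i j].
  move=> j Jj; apply/seteqP; split => y.
    by move=> [i [h ->]]; exists i => //; split => //; exact: ltJ_Jdown h.
  by move=> [i [Ji h] <-]; exists i, h.
exists q => -[b n] Jj.
suff hex : exists x, T (b, n) x /\ ~ span (q @` [set i | J i /\ ltJ i (b, n)]) x.
  by rewrite qE prevE //; exact: (xgetPex 0 hex).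
apply: contrapT => nex.
set P := q @` [set i | J i /\ ltJ i (b, n)].
have sub : T (b, n) `<=` span P.
  by move=> x Tx; apply: contrapT => nsp; apply: nex; exists x.
have [v Hv] := Tlarge (b, n) Jj P sub.
have [[s0 s0b]|nos] := pselect (exists s0, lt1 s0 b).
  apply: (Dsmall b Jj).
  have E1 : [set: X] #<= E := card_eq_leW (card_esym EX).
  have E2 : E #<= (P `|` [set v]) `*` [set: nat].
    by apply: dim_le => // e _; apply: Hv.
  have E3 : (P `|` [set v]) `*` [set: nat] #<= seg b `*` [set: nat].
    have /choice [idx Hidx] : forall y, exists i, P y -> [/\ J i, ltJ i (b, n) & q i = y].
      move=> y; have [Py|nP] := pselect (P y); last by exists (b, n) => /nP.
      move: Py; rewrite /P => -[i [Ji li] qi].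
      by exists i.
    pose code (t k m : nat) := pickle (t, k, m).
    have codeinj t k m t' k' m' : code t k m = code t' k' m' -> [/\ t = t', k = k' & m = m'].
      by move/(pcan_inj pickleK_inv) => [-> -> ->].
    pose f (ym : X * nat) := if ym.1 == v then (s0, code 0 0 ym.2) else
      if (idx ym.1).1 == b then (s0, code 1 (idx ym.1).2 ym.2)
      else ((idx ym.1).1, code 2 (idx ym.1).2 ym.2).
    apply: (inj_card_le (f := f)).
      move=> [y m] [y' m'] /set_mem [/= Py _] /set_mem [/= Py' _]; rewrite /f /=.
      have [yv|yv] := eqVneq y v; have [y'v|y'v] := eqVneq y' v => /=.
      + by move=> /(congr1 snd) /= /codeinj [_ _ ->]; rewrite yv y'v.
      + by case: ifP => _ /(congr1 snd) /= /codeinj [].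
      + by case: ifP => _ /(congr1 snd) /= /codeinj [].
      have [|Ji li qi] := Hidx y; first by case: Py => // /= /eqP; rewrite (negbTE yv).
      have [|Ji' li' qi'] := Hidx y'; first by case: Py' => // /= /eqP; rewrite (negbTE y'v).
      have [ib|ib] := eqVneq (idx y).1 b; have [ib'|ib'] := eqVneq (idx y').1 b => /=.
      * move=> e; have /= /codeinj [_ e2 ->] := congr1 snd e.
        by rewrite -qi -qi' [idx y]surjective_pairing [idx y']surjective_pairing ib ib' e2.
      * by move=> /(congr1 snd) /= /codeinj [].
      * by move=> /(congr1 snd) /= /codeinj [].
      * move=> e; have /= /codeinj [_ e2 ->] := congr1 snd e; have /= e1 := congr1 fst e.
        by rewrite -qi -qi' [idx y]surjective_pairing [idx y']surjective_pairing e1 e2.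
    move=> [y m] [/= Py _]; rewrite /f /=; split => //=.
    case: ifPn => // yv; case: ifPn => // /eqP ib.
    have [|Ji li qi] := Hidx y; first by case: Py => // /= /eqP; rewrite (negbTE yv).
    by case: li => // -[/ib].
  exact: card_le_trans E1 (card_le_trans E2 E3).
apply: (Hinf (v :: map (fun k => q (b, k)) (iota 0 n))).
move=> x; apply: (span_mono _ (Hv x)) => y [[i [Ji li] <-]|->]; last by rewrite /= inE eqxx.
rewrite /= inE; apply/orP; right; apply/mapP; exists i.2.
  case: li => [l|[_ l]]; first by exfalso; apply: nos; exists i.1.
  by rewrite mem_iota.
case: li => [l|[e _]]; first by exfalso; apply: nos; exists i.1.
by case: i e {Ji} => ? ? /= ->.
Qed.
End Transfinite.

Lemma minpos (K : numFieldType) (a b : K) : 0 < a -> 0 < b ->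
  exists c, [/\ 0 < c, c <= a & c <= b].
Proof.
move=> a0 b0; exists (a * b / (a + b)); split.
- by rewrite divr_gt0 ?mulr_gt0 ?addr_gt0.
- rewrite ler_pdivrMr ?addr_gt0 // ler_pM2l // lerDr ltW //.
- rewrite ler_pdivrMr ?addr_gt0 // [a * b]mulrC ler_pM2l // lerDl ltW //.
Qed.

Lemma zid (V : zmodType) (x y a c d : V) : x - (y + (c - d)) = x - y - (a - d) + (a - c).
Proof. by rewrite opprD !opprB -!addrA addKr. Qed.

Section Topo.
Variables (K : numFieldType) (X : normedModType K).

Lemma ballN (x y : X) r : ball x r y <-> `|x - y| < r.
Proof. by rewrite -ball_normE. Qed.

Definition cball (x : X) (r : K) := [set y | `|x - y| <= r].

Lemma cball_closed x r : closed (cball x r).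
Proof.
move=> y cly; rewrite /cball /=; apply: contrapT => /negP nle.
have rr : r \is Num.real.
  have [z [cz _]] := cly _ (nbhsx_ballx y 1 ltr01).
  exact: ger0_real (le_trans (normr_ge0 _) cz).
have lt : r < `|x - y| by rewrite real_ltNge ?normr_real.
have d0 : 0 < `|x - y| - r by rewrite subr_gt0.
have [z [cz /ballN bz]] := cly _ (nbhsx_ballx y _ d0).
have : `|x - y| < `|x - y|.
  apply: (le_lt_trans (ler_distD z x y)).
  rewrite [X in _ < X](_ : _ = r + (`|x - y| - r)); last by rewrite addrCA subrr addr0.

  by apply: ler_ltD => //; rewrite distrC.
by rewrite ltxx.
Qed.

Lemma cball_convex x r y z l : cball x r y -> cball x r z -> 0 <= l -> l <= 1 ->
  cball x r (y + l *: (z - y)).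
Proof.
rewrite /cball /= => cy cz l0 l1.
have -> : x - (y + l *: (z - y)) = (1 - l) *: (x - y) + l *: (x - z).
  by rewrite scalerBl scale1r !scalerBr (zid x y (l *: x)).
apply: (le_trans (ler_normD _ _)); rewrite !normrZ ger0_norm ?subr_ge0 // ger0_norm //.
apply: (le_trans (lerD (ler_wpM2l _ cy) (ler_wpM2l l0 cz))); first by rewrite subr_ge0.
by rewrite -mulrDl subrK mul1r.
Qed.

Lemma large_ball (T : set X) u e v : 0 < e ->
  (forall x, ball u e x -> exists l, l != 1 /\ T (x + l *: (v - x))) -> large T.
Proof.
move=> e0 H G TG; exists v.
set W := span (G `|` [set v]).
have Wv : W v by apply: span_sub; right.
have TW : T `<=` W by move=> t /TG; apply: span_mono => y Gy; left.
have bW x : ball u e x -> W x.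
  move=> /H [l [l1 Tc]].
  have -> : x = (1 - l)^-1 *: ((x + l *: (v - x)) - l *: v).
    have -> : x + l *: (v - x) - l *: v = (1 - l) *: x.
      by rewrite (scalerBr l v x) addrCA addrAC subrr add0r scalerBl scale1r.
    by rewrite scalerA mulVf ?scale1r // subr_eq0 eq_sym.
  by apply/spanZ/spanD; [apply: TW|apply/spanN/spanZ].
move=> z; set k := e / (`|z| + e).
have k0 : 0 < k by rewrite divr_gt0 // ltr_wpDl.
have Wu : W u by apply: bW; apply: ballxx.
have Wuz : W (u + k *: z).
  apply: bW; apply/ballN; rewrite opprD addrA subrr add0r normrN normrZ gtr0_norm //.
  rewrite /k mulrAC ltr_pdivrMr ?ltr_wpDl // ltr_pM2l //.
  by rewrite ltrDl.
have -> : z = k^-1 *: ((u + k *: z) - u).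
  by rewrite addrAC subrr add0r scalerA mulVf ?scale1r // gt_eqF.
by apply/spanZ/spanD => //; apply: spanN.
Qed.


Lemma open_ball (A : set X) y : open A -> A y -> exists r, 0 < r /\ ball y r `<=` A.
Proof.
move=> oA Ay; have /nbhs_ballP [r r0 sub] : nbhs y A by apply: open_nbhs_nbhs.
by exists r.
Qed.

Lemma conn_crit (S' : set X) :
  (forall P Q : set X, open P -> open Q -> P `&` Q = set0 -> S' `<=` P `|` Q ->
     (exists a, S' a /\ P a) -> (exists b, S' b /\ Q b) -> False) -> connected S'.
Proof.
move=> H B0 [a B0a] [C1 oC1 e1] [C2 cC2 e2]; apply: contrapT => neq.
have B0S : B0 `<=` S' by rewrite e1 => y [].
have [b [Sb nB0b]] : exists b, S' b /\ ~ B0 b.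
  apply: contrapT => nb; apply: neq; apply/seteqP; split => // y Sy.
  by apply: contrapT => ny; apply: nb; exists y.
have B0C1 y : B0 y -> C1 y by rewrite e1 => -[].
have B0C2 y : B0 y -> C2 y by rewrite e2 => -[].
have /choice [rad Hrad] : forall y, exists r : K, 0 < r /\
    ((B0 y -> ball y r `<=` C1) /\ (S' y -> ~ B0 y -> ball y r `<=` ~` C2)).
  move=> y; have [Ay|nAy] := pselect (B0 y).
    by have [r [r0 sub]] := open_ball oC1 (B0C1 y Ay); exists r.
  have [Sy|nSy] := pselect (S' y); last by exists 1; split => //; split => // /nSy.
  have nC2 : (~` C2) y by move=> C2y; apply: nAy; rewrite e2.
  have [r [r0 sub]] := open_ball (closed_openC cC2) nC2.
  by exists r; split => //; split.
pose P := \bigcup_(y in B0) ball y (rad y / 2).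
pose Q := \bigcup_(y in S' `\` B0) ball y (rad y / 2).
apply: (H P Q).
- by apply: bigcup_open => y _; apply: ball_open.
- by apply: bigcup_open => y _; apply: ball_open.
- apply/seteqP; split => // z [[y Ay /ballN bz] [y' [Sy' By'] /ballN bz']].
  have [r0 [HA _]] := Hrad y; have [r0' [_ HB]] := Hrad y'.
  have d : `|y - y'| < rad y / 2 + rad y' / 2.
    by apply: (le_lt_trans (ler_distD z _ _)); apply: ltrD => //; rewrite distrC.
  have := real_leVge (gtr0_real r0) (gtr0_real r0'); case/orP => rr.
  + have : ball y' (rad y') y.
      apply/ballN; rewrite distrC; apply: (lt_le_trans d).
      by rewrite [X in _ <= X](splitr (rad y')) lerD2r ler_pM2r.
    by move=> /(HB Sy' By'); apply; apply: B0C2.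
  + have : ball y (rad y) y'.
      apply/ballN; apply: (lt_le_trans d).
      by rewrite [X in _ <= X](splitr (rad y)) lerD2l ler_pM2r.
    by move=> /(HA Ay) C1y'; apply: By'; rewrite e1.
- move=> y Sy; have [Ay|nAy] := pselect (B0 y).
    by left; exists y => //; apply: ballxx; rewrite divr_gt0 //; case: (Hrad y).
  by right; exists y => //; apply: ballxx; rewrite divr_gt0 //; case: (Hrad y).
- by exists a; split; [apply: B0S|exists a => //; apply: ballxx; rewrite divr_gt0 //; case: (Hrad a)].
- by exists b; split => //; exists b => //; apply: ballxx; rewrite divr_gt0 //; case: (Hrad b).
Qed.

End Topo.

Section TopoMain.
Variables (K : numFieldType) (X : normedModType K).
Hypothesis seg : forall (P Q : set X) x b, open P -> open Q -> P `&` Q = set0 -> P x -> Q b ->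
  exists l : K, [/\ 0 <= l, l <= 1, ~ P (x + l *: (b - x)) & ~ Q (x + l *: (b - x))].

Definition meets_large (S : set X) := forall U, open U -> large (~` U) -> exists x, S x /\ ~ U x.
Definition convex (D : set X) := forall y z l, D y -> D z -> 0 <= l -> l <= 1 -> D (y + l *: (z - y)).

Lemma sep_contra (S S' D P Q : set X) a b e :
  meets_large S -> open P -> open Q -> P `&` Q = set0 -> S' `<=` P `|` Q -> closed D ->
  convex D -> (forall x, S x -> D x -> S' x) -> P a -> 0 < e -> ball a e `<=` D ->
  Q b -> D b -> False.
Proof.
move=> HM oP oQ PQ SPQ cD cvD SDS Pa e0 bD Qb Db.
have [e' [e'0 subP]] := open_ball oP Pa.
have [c [c0 ce ce']] := minpos e0 e'0.
set U := ~` (D `&` ~` P `&` ~` Q).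
have oU : open U by apply: closed_openC; apply: closedI; [apply: closedI => //|]; apply: open_closedC.
have lU : large (~` U).
  rewrite /U setCK; apply: (large_ball (u := a) (e := c) (v := b)) => // x bx.
  have xP : P x by apply: subP; apply: (le_ball ce').
  have xD : D x by apply: bD; apply: (le_ball ce).
  have [l [l0 l1 nP nQ]] := seg oP oQ PQ xP Qb.
  exists l; split; last by split; [split|]; [apply: cvD|..].
  by apply/eqP => l1'; apply: nQ; rewrite l1' scale1r addrC subrK.
have [s [Ss nUs]] := HM U oU lU.
have : (D `&` ~` P `&` ~` Q) s by apply: contrapT; exact: nUs.
move=> [[Ds nPs] nQs].
by have [] := SPQ s (SDS s Ss Ds).
Qed.

Lemma main_topo (S : set X) : meets_large S ->
  [/\ connected S, locally_connected_set S & dense S].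
Proof.
move=> HM; split.
- apply: conn_crit => P Q oP oQ PQ SPQ [a [Sa Pa]] [b [Sb Qb]].
  exact: (sep_contra (S' := S) (D := setT) (e := 1) HM oP oQ PQ SPQ closedT (fun _ _ _ _ _ _ _ => I) (fun x Sx _ => Sx) Pa ltr01 (fun _ _ => I) Qb I).
- move=> x Sx U oU Ux; have [r [r0 sub]] := open_ball oU Ux.
  exists (ball x r); split; [exact: ball_open|exact: ballxx|by move=> y [/sub]|].
  apply: conn_crit => P Q oP oQ PQ SPQ [a [[ba Sa] Pa]] [b [[bb Sb] Qb]].
  move/ballN: ba; rewrite -subr_gt0 => ba; move/ballN: bb; rewrite -subr_gt0 => bb.
  have [c [c0 ca cb]] := minpos (ba : 0 < r - `|x - a|) (bb : 0 < r - `|x - b|).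
  have c20 : 0 < c / 2 by rewrite divr_gt0.
  apply: (sep_contra (S := S) (S' := ball x r `&` S) (a := a) (b := b) (D := cball x (r - c / 2)) (e := c / 2) HM oP oQ PQ SPQ
     (@cball_closed _ _ x (r - c / 2)) _ _ Pa c20).
  + by move=> y z l yD zD l0 l1; apply: cball_convex.
  + move=> y Sy Dy; split => //; apply/ballN; apply: (le_lt_trans Dy).
    by rewrite ltrBlDr ltrDl.
  + move=> z /ballN az; rewrite /cball /=; apply: (le_trans (ler_distD a _ _)).
    apply: (le_trans (lerD (lexx _) (ltW az))).
    by rewrite lerBrDr -addrA -splitr addrC -lerBrDr.
  + exact: Qb.
  + rewrite /cball /=; apply: (le_trans (y := r - c)).
      by rewrite lerBrDr addrC -lerBrDr.
    by rewrite lerB // ler_pdivrMr // ler_pMr // ler1n.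
- move=> O [y Oy] oO; have [r [r0 sub]] := open_ball oO Oy.
  have r20 : 0 < r / 2 by rewrite divr_gt0.
  have [|s [Ss nUs]] := HM (~` cball y (r / 2)) (closed_openC (@cball_closed _ _ y (r / 2))).
    rewrite setCK; apply: (large_ball (u := y) (e := r / 2) (v := y)) => // x /ballN bx.
    by exists 0; split; [rewrite eq_sym oner_eq0|rewrite scale0r addr0; apply: ltW].
  exists s; split => //; apply: sub; apply/ballN.
  have : cball y (r / 2) s by apply: contrapT.
  rewrite /cball /= => h; apply: (le_lt_trans h).
  by rewrite ltr_pdivrMr // ltr_pMr // ltr1n.
Qed.

End TopoMain.

Definition seg_prop (K : numFieldType) (X : normedModType K) :=
  forall (P Q : set X) x b, open P -> open Q -> P `&` Q = set0 -> P x -> Q b ->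
  exists l : K, [/\ 0 <= l, l <= 1, ~ P (x + l *: (b - x)) & ~ Q (x + l *: (b - x))].

Lemma large_mono (K : numFieldType) (X : lmodType K) (T T' : set X) :
  T `<=` T' -> large T -> large T'.
Proof. by move=> TT' lT G T'G; apply: lT => x /TT' /T'G. Qed.

Lemma largeT (K : numFieldType) (X : lmodType K) : large [set: X].
Proof.
move=> G TG; exists 0 => x; apply: (span_mono _ (TG x I)) => y Gy; by left.
Qed.

Lemma claim_of_seg (K : numFieldType) : (forall X : normedModType K, seg_prop X) ->
  theorem2_claim K.
Proof.
move=> Hseg X Hinf Hopen [E [[EindL EspL] EX]].
have HE : indep E by apply/indepP.
have Espan : forall x, span E x by apply/spansP.
have Hinf' : infdim X by move=> s Hs; apply: (Hinf s); apply/spansP.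
have [J [lt [psi [tot tr [psiJ psiinj] Jn main]]]] := transfinite HE Espan EX Hinf'.
have [phi [_ phiinj]] := card_le_fun (0 : X) (card_eq_leW Hopen).
pose jU (U : set X) := ((psi (phi U)).1, (2 * (psi (phi U)).2)%N).
pose al (x : X) := ((psi x).1, (2 * (psi x).2).+1).
have JjU U : J (jU U) by apply: (Jn _ (psi (phi U)).2); rewrite -surjective_pairing.
have Jal x : J (al x) by apply: (Jn _ (psi x).2); rewrite -surjective_pairing.
have jUinj U U' : open U -> open U' -> jU U = jU U' -> U = U'.
  move=> oU oU' [e1 e2]; apply: phiinj; rewrite ?inE //; apply: psiinj.
  by rewrite [psi _]surjective_pairing [psi (phi U')]surjective_pairing e1; congr pair; apply/eqP; rewrite -(eqn_pmul2l (isT : (0 < 2)%N)) e2.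
have alinj : injective al.
  move=> x x' [e1 e2]; apply: psiinj.
  by rewrite [psi _]surjective_pairing [psi x']surjective_pairing e1; congr pair; apply/eqP; rewrite -(eqn_pmul2l (isT : (0 < 2)%N)) e2.
have jUal U x : jU U <> al x.
  by move=> [_ /(congr1 odd)]; rewrite /= !oddM.
pose T (j : X * nat) := [set x : X | forall U, open U -> jU U = j -> large (~` U) -> ~ U x].
have Tlarge : forall j, J j -> large (T j).
  move=> j _; have [[U [oU eU lU]]|nU] := pselect (exists U, [/\ open U, jU U = j & large (~` U)]).
    by apply: (large_mono _ lU) => x nUx U' oU' eU' _; rewrite (jUinj U' U) // eU eU'.
  apply: (large_mono _ (@largeT _ X)) => x _ U oU eU lU; exfalso; apply: nU; exists U.
  by split.
have [q Hq] := main T Tlarge.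
pose eps (A : set X) j : K := if `[< exists x, al x = j /\ ~ A x >] then -1 else 1.
pose g A j := eps A j *: q j.
have eps2 A j : eps A j * eps A j = 1 by rewrite /eps; case: ifP => _; rewrite ?mulrNN mulr1.
have gind A : indep (g A @` J).
  have [] // := indep_wo (q := g A) tot tr.
  move=> j Jj sp; have [_ nsp] := Hq j Jj; apply: nsp.
  have sub : span (g A @` [set i | J i /\ lt i j]) `<=` span (q @` [set i | J i /\ lt i j]).
    by apply: span_trans => _ [i Pi <-]; apply/spanZ/span_sub; exists i.
  by have := spanZ (eps A j) (sub _ sp); rewrite /g scalerA eps2 scale1r.
have /choice [bas Hbas] : forall A, exists B, [/\ g A @` J `<=` B, indep B & forall x, span B x].
  by move=> A; apply: basis_ext.
have qnz j : J j -> q j != 0.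
  by move=> Jj; apply/eqP => q0; have [_] := Hq j Jj; rewrite q0; apply; apply: span0.
have epsal A x : eps A (al x) = if `[< A x >] then 1 else -1.
  rewrite /eps; case: (asboolP (A x)) => Ax; case: asboolP => // h.
  - by exfalso; case: h => x' [/alinj -> ]. 
  - by exfalso; apply: h; exists x.
have memA A x : A x <-> bas A (q (al x)).
  have [gsub bind _] := Hbas A.
  split => [Ax|bq].
    have := gsub (g A (al x)) (ex_intro2 _ _ (al x) (Jal x) erefl).
    by rewrite /g epsal; case: asboolP => // _; rewrite scale1r.
  apply: contrapT => nAx.
  have bmq : bas A (- q (al x)).
    have := gsub (g A (al x)) (ex_intro2 _ _ (al x) (Jal x) erefl).
    by rewrite /g epsal; case: asboolP => // _; rewrite scaleN1r.
  have qmq : q (al x) != - q (al x).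
    apply/eqP => /eqP; rewrite -addr_eq0 -mulr2n -scaler_nat scaler_eq0 pnatr_eq0 /=.
    by rewrite (negbTE (qnz _ (Jal x))).
  have u2 : uniq [:: q (al x); - q (al x)] by rewrite /= inE qmq.
  have sub2 : forall y, y \in [:: q (al x); - q (al x)] -> bas A y.
    by move=> y; rewrite !inE => /orP[/eqP->|/eqP->].
  have s0 : \sum_(y <- [:: q (al x); - q (al x)]) (fun=> (1 : K)) y *: y = 0.
    by rewrite big_cons big_seq1 !scale1r addrN.
  by have /eqP := bind _ _ u2 sub2 s0 (q (al x)) (mem_head _ _); rewrite oner_eq0.
have basinj : injective bas.
  move=> A A' e; apply/funext => x; apply/propext.
  by split => /(memA _ x) h; apply/(memA _ x); rewrite ?e // -e.
exists (range bas); split.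
  by apply: inj_card_eq => A A' _ _; apply: basinj.
move=> _ [A _ <-]; have [gsub bind bspan] := Hbas A.
have HM : meets_large (bas A).
  move=> U oU lU; exists (q (jU U)); split.
    have := gsub (g A (jU U)) (ex_intro2 _ _ (jU U) (JjU U) erefl).
    rewrite /g /eps; case: asboolP => [[x [e _]]|_]; first by exfalso; apply: (jUal U x).
    by rewrite scale1r.
  by have [TU _] := Hq (jU U) (JjU U); apply: TU.
have [c l d] := main_topo (Hseg X) HM.
by split => //; split; [apply/indepP|apply/spansP].
Qed.

Lemma seg_gen (R : realType) (K : numFieldType) (X : normedModType K) (i : R -> K) :
  continuous i -> i 0 = 0 -> i 1 = 1 ->
  (forall t, 0 <= t -> t <= 1 -> 0 <= i t /\ i t <= 1) -> seg_prop X.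
Proof.
move=> ic i0 i1 i01 P Q x b oP oQ PQ Px Qb.
pose A := [set t : R | 0 <= t <= 1].
have cA : connected A.
  apply/connected_intervalP/is_intervalPlt => u v /andP[u0 _] /andP[_ v1] z /andP[uz zv].
  by rewrite /A /= (le_trans u0 (ltW uz)) (le_trans (ltW zv) v1).
pose g t := x + i t *: (b - x).
have gc : continuous g.
  move=> t; apply: cvgD; first exact: cvg_cst.
  exact: (continuousZl (ic t)).
have cI := connected_continuous_connected cA (continuous_subspaceT gc).
apply: contrapT => nex.
have cov : forall t, A t -> P (g t) \/ Q (g t).
  move=> t /andP[t0 t1]; have [h1 h2] := i01 t t0 t1.
  have [Pg|nPg] := pselect (P (g t)); first by left.
  have [Qg|nQg] := pselect (Q (g t)); first by right.
  by exfalso; apply: nex; exists (i t).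
have A0 : A 0 by rewrite /A /= lexx ler01.
have A1 : A 1 by rewrite /A /= lexx ler01.
have g0 : g 0 = x by rewrite /g i0 scale0r addr0.
have g1 : g 1 = b by rewrite /g i1 scale1r addrC subrK.
have disj y : P y -> Q y -> False.
  move=> Py Qy; have : (P `&` Q) y by split.
  by rewrite PQ.
have e := cI ([set g t | t in A] `&` P).
have : [set g t | t in A] `&` P = [set g t | t in A].
  apply: e.
  - by exists x; split => //; exists 0 => //.
  - by exists P.
  - exists (~` Q); first exact: open_closedC.
    apply/seteqP; split => y [[t At <-] h].
      by split; [exists t|move=> Qg; apply: (disj _ h Qg)].
    split; first by exists t.
    by have [|//] := cov t At.
move=> /seteqP [_ /(_ b)] [|_ Pb]; first by exists 1 => //.
exact: disj Pb Qb.
Qed.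

Lemma seg_real (R : realType) (X : normedModType R) : seg_prop X.
Proof.
apply: (@seg_gen R R X id) => // t; exact: cvg_id.
Qed.

Lemma seg_complex (R : realType) (X : normedModType R[i]) : seg_prop X.
Proof.
apply: (@seg_gen R R[i] X (fun t => (t%:C)%C)) => //.
- move=> t; apply/cvgrPdist_lt => e e0.
  have Re0 : 0 < complex.Re e by move: e0; rewrite ltcE => /andP[_].
  have eE : e = ((complex.Re e)%:C)%C by rewrite RRe_real // gtr0_real.
  have : (fun s : R => s) @ t --> t by apply: cvg_id.
  move/cvgrPdist_lt => /(_ _ Re0); apply: filterS => s h.
  rewrite eE -rmorphB normc_def /= expr0n addr0 sqrtr_sqr ltcR.
  exact: h.
- move=> t t0 t1; by rewrite !lecR.
Qed.


Theorem theorem2 (R : realType) :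
  theorem2_claim R /\ theorem2_claim R[i].
Proof.
split; apply: claim_of_seg; [exact: seg_real | exact: seg_complex].
Qed.
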